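(* Let $\alpha,\beta$ be relatively prime positive integers and let $s\ge2$ be an integer. If $n$ is a positive integer with $n>\beta g_{s-1}g_{s-2}$, then $s(n)\ge s$.
   Context: For positive integers $a_1,a_2$, the $(\alpha,\beta)$-walk $w_k(a_1,a_2)$ is given by $w_1=a_1$, $w_2=a_2$, $w_{k+2}=\alpha w_{k+1}+\beta w_k$ ($k\ge1$). For a positive integer $n$, $s(n;a_1,a_2)$ is the (largest) index $s$ with $w_s(a_1,a_2)=n$ ($-\infty$ if none), and $s(n)=\max_{a_1,a_2\ge1}s(n;a_1,a_2)$. The sequence $g_k$: $g_0=0$, $g_1=1$, $g_2=\alpha$, $g_{k+2}=\alpha g_{k+1}+\beta g_k$ for $k\ge1$. *)

(* Defs.v *)
From mathcomp Require Import all_boot.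
Set Implicit Arguments. Unset Strict Implicit. Unset Printing Implicit Defensive.

Fixpoint rec_pair (al be x0 x1 k : nat) : nat * nat :=
  match k with
  | 0 => (x0, x1)
  | k'.+1 => let: (x, y) := rec_pair al be x0 x1 k' in (y, al * y + be * x)
  end.

(* The (al,be)-walk, 1-indexed: walk al be a1 a2 1 = a1, walk ... 2 = a2,
   w_{k+2} = al w_{k+1} + be w_k.  (Index 0 is meaningless, = a1.) *)
Definition walk (al be a1 a2 k : nat) : nat := (rec_pair al be a1 a2 k.-1).1.

Definition gseq (al be k : nat) : nat := (rec_pair al be 0 1 k).1.

(* Main.v *)
Require Import Defs.
From mathcomp Require Import all_boot zify.

Lemma frob A B n : 0 < B -> coprime A B -> A * B < n ->
  exists x y, [/\ 0 < x, 0 < y & A * x + B * y = n].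
Proof.
move=> B0 cAB lt.
have [a _ ha] := Bezoutr A B0.
rewrite (eqP cAB) in ha.
have [t ht] := dvdnP ha.
case: B B0 cAB lt ht ha => // b _ cAB lt ht ha.
set x0 := b * a * n.
have E : n * b.+1 + A * x0 = (b * n * t) * b.+1 + n.
  rewrite /x0; nia.
have H1 : A * x0 = n %[mod b.+1].
  by rewrite -(modnMDl n (A * x0)) E modnMDl.
set x := (x0 + b) %% b.+1 + 1.
have xle : x <= b.+1 by rewrite /x addn1 ltn_pmod.
have H2 : x = x0 %[mod b.+1].
  by rewrite /x modnDml -addnA addn1 -(mul1n b.+1) modnDr.
have H3 : A * x = n %[mod b.+1] by rewrite -H1 -modnMmr H2 modnMmr.
have Axle : A * x < n.
  apply: leq_ltn_trans lt; exact: leq_mul.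
have := eqn_mod_dvd b.+1 (ltnW Axle); rewrite eq_sym H3 eqxx => /esym/dvdnP [y hy].
have x0' : 0 < x by rewrite /x addn1.
clearbody x x0.
exists x, y; split.
- by [].
- case: y hy => [|y]// hy; lia.
- lia.
Qed.

Lemma rp_shift al be x0 x1 m : (rec_pair al be x0 x1 m.+1).1 = (rec_pair al be x0 x1 m).2.
Proof. by rewrite /=; case: (rec_pair al be x0 x1 m). Qed.

Lemma rp_rec al be x0 x1 m : (rec_pair al be x0 x1 m.+1).2 =
  al * (rec_pair al be x0 x1 m).2 + be * (rec_pair al be x0 x1 m).1.
Proof. by rewrite /=; case: (rec_pair al be x0 x1 m). Qed.

Lemma g_rec al be m : gseq al be m.+2 = al * gseq al be m.+1 + be * gseq al be m.
Proof. by rewrite /gseq !rp_shift rp_rec. Qed.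

Lemma walk_form al be a1 a2 m :
  (rec_pair al be a1 a2 m.+1).1 = be * a1 * gseq al be m + a2 * gseq al be m.+1 /\
  (rec_pair al be a1 a2 m.+1).2 = be * a1 * gseq al be m.+1 + a2 * gseq al be m.+2.
Proof.
elim: m => [|m [IH1 IH2]]; first (rewrite /gseq /=; split; lia).
rewrite rp_shift IH2 rp_rec IH1 IH2; split => //.
rewrite (g_rec al be m.+1) (g_rec al be m); lia.
Qed.

Lemma g_cop al be : coprime al be -> forall k,
  coprime (gseq al be k.+1) be /\ coprime (gseq al be k) (gseq al be k.+1).
Proof.
move=> cab; elim=> [|k [H1 H2]]; first by rewrite /gseq /= coprime1n coprimen1.
rewrite g_rec; split.
  rewrite /coprime gcdnC addnC [be * _]mulnC gcdnMDl gcdnC.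
  by change (coprime (al * gseq al be k.+1) be); rewrite coprimeMl cab H1.
rewrite /coprime gcdnMDl.
change (coprime (gseq al be k.+1) (be * gseq al be k)).
by rewrite coprimeMr H1 coprime_sym H2.
Qed.

Lemma g_pos al be : 0 < al -> forall k, 0 < gseq al be k.+1.
Proof.
move=> a0; elim=> [|k IH]; first by rewrite /gseq.
rewrite g_rec; apply: leq_trans (leq_addr _ _); by rewrite muln_gt0 a0 IH.
Qed.

Theorem lemma3p3 (al be s n : nat) :
  0 < al -> 0 < be -> coprime al be -> 2 <= s -> 0 < n ->
  n > be * gseq al be s.-1 * gseq al be s.-2 ->
  exists a1 a2 k, [/\ 0 < a1, 0 < a2, 1 <= k, s <= k & walk al be a1 a2 k = n].
Proof.
move=> a0 b0 cab; case: s => [|[|m]] // _ n0 /= hn.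
have [H1 H2] := g_cop _ _ cab m.
have Bp := g_pos _ be a0 m.
have cAB : coprime (be * gseq al be m) (gseq al be m.+1).
  by rewrite coprimeMl coprime_sym H1 H2.
have lt : be * gseq al be m * gseq al be m.+1 < n.
  by rewrite mulnAC.
have [x [y [x0 y0 e]]] := frob _ _ _ Bp cAB lt.
exists x, y, m.+2; split => //.
rewrite /walk /= (walk_form al be x y m).1 -e; lia.
Qed.
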